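(* Fix integers $d_1,d_2\ge0$ and $a_1,a_2\ge0$, and let $(S_1,S_2)$ be a compatible pair on $D_{a_1,a_2}$ with $S_1(h)\le d_1$ for all $h\in D_1$ and $S_2(v)\le d_2$ for all $v\in D_2$. (a) If $0\le d_2a_2\le a_1$, then $(|S_1|,|S_2|)$ lies in the (possibly degenerate) trapezoid that is the convex hull of $(0,0)$, $(d_1a_1,0)$, $(0,d_2a_2)$, $(d_1a_1-d_1d_2a_2,d_2a_2)$. (b) If $0\le d_1a_1\le a_2$, then $(|S_1|,|S_2|)$ lies in the (possibly degenerate) trapezoid that is the convex hull of $(0,0)$, $(d_1a_1,0)$, $(0,d_2a_2)$, $(d_1a_1,d_2a_2-d_1d_2a_1)$. (c) If $0<a_1<d_2a_2$ and $0<a_2<d_1a_1$, then $(|S_1|,|S_2|)$ lies in the non-convex quadrilateral with corner vertices $(0,0)$, $(d_1a_1,0)$, $(a_2,a_1)$, $(0,d_2a_2)$ (closed region bounded by the polygon $(0,0)\to(d_1a_1,0)\to(a_2,a_1)\to(0,d_2a_2)\to(0,0)$), where the boundary segments $[(0,0),(d_1a_1,0)]$ and $[(0,0),(0,d_2a_2)]$ are included while the boundary segments $((d_1a_1,0),(a_2,a_1)]$ and $((0,d_2a_2),(a_2,a_1)]$ are excluded.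
   Context: Maximal Dyck path: $D=D_{a_1,a_2}$ is the lattice path of unit East and North steps from $(0,0)$ to $(a_1,a_2)$ staying weakly below the diagonal of $[0,a_1]\times[0,a_2]$ and closest to it. $D_1$, $D_2$ are its sets of horizontal and vertical edges. Identify $(0,0)\equiv(a_1,a_2)$ so $D$ is a cyclic sequence of edges; for edges $e,e'$, $ee'$ is the subpath from $e$ to $e'$ inclusive following $D$ cyclically, and $(ee')_1,(ee')_2$ are its horizontal and vertical edges. Gradings $S_1:D_1\to\mathbb{Z}_{\ge0}$, $S_2:D_2\to\mathbb{Z}_{\ge0}$ form a compatible pair if for every $h\in D_1$, $v\in D_2$ there is an edge $e$ with either $he$ a proper subpath of $hv$ and $|(he)_2|=\sum_{h'\in(he)_1}S_1(h')$, or $ev$ a proper subpath of $hv$ and $|(ev)_1|=\sum_{v'\in(ev)_2}S_2(v')$. $|S_i|$ denotes the sum of the values of $S_i$. *)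

(* Defs.v *)
From mathcomp Require Import all_boot all_order all_algebra.
Set Implicit Arguments. Unset Strict Implicit. Unset Printing Implicit Defensive.
Import Order.TTheory GRing.Theory Num.Theory.

(* A path is encoded as the sequence of its edges in order starting at (0,0):
   [true] = North (vertical) unit step, [false] = East (horizontal) unit step.
   The maximal Dyck path is the highest lattice path weakly below the segment
   from (0,0) to (a1,a2); it is produced greedily: from the current lattice
   point (x,y), step North whenever (x,y+1) is still weakly below the diagonal,
   i.e. (y+1)*a1 <= a2*x (and y < a2), otherwise step East. *)
Fixpoint dyck_aux (fuel x y a1 a2 : nat) : seq bool :=
  match fuel with
  | 0 => [::]
  | f.+1 =>
      if (y < a2) && (y.+1 * a1 <= a2 * x) then true :: dyck_aux f x y.+1 a1 a2
      else false :: dyck_aux f x.+1 y a1 a2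
  end.

Definition dyck (a1 a2 : nat) : seq bool := dyck_aux (a1 + a2) 0 0 a1 a2.

(* Edges of D are the positions 0 .. n-1, n = size (dyck a1 a2) = a1 + a2. *)
Definition nedges (a1 a2 : nat) : nat := size (dyck a1 a2).
Definition is_vert (a1 a2 : nat) (e : nat) : bool :=
  (e < nedges a1 a2) && nth false (dyck a1 a2) e.
Definition is_horiz (a1 a2 : nat) (e : nat) : bool :=
  (e < nedges a1 a2) && ~~ nth false (dyck a1 a2) e.

(* Cyclic subpath e e' (from e to e' inclusive, following D cyclically,
   with (0,0) identified with (a1,a2)); as a sequence of edge positions. *)
Definition subpath (a1 a2 : nat) (e e' : nat) : seq nat :=
  let n := nedges a1 a2 in
  [seq (e + k) %% n | k <- iota 0 ((e' + n - e) %% n).+1].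

Definition proper_subpath (p q : seq nat) : bool := infix p q && (p != q).

Definition nvert (a1 a2 : nat) (s : seq nat) : nat := count (is_vert a1 a2) s.
Definition nhoriz (a1 a2 : nat) (s : seq nat) : nat := count (is_horiz a1 a2) s.

(* Gradings S1 : D1 -> Z_{>=0}, S2 : D2 -> Z_{>=0} are represented by functions
   nat -> nat; only their values on horizontal (resp. vertical) edges matter. *)
Definition compatible (a1 a2 : nat) (S1 S2 : nat -> nat) : Prop :=
  forall h v, is_horiz a1 a2 h -> is_vert a1 a2 v ->
  exists e, e < nedges a1 a2 /\
    ((proper_subpath (subpath a1 a2 h e) (subpath a1 a2 h v) /\
      nvert a1 a2 (subpath a1 a2 h e)
        = \sum_(h' <- subpath a1 a2 h e | is_horiz a1 a2 h') S1 h')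
     \/
     (proper_subpath (subpath a1 a2 e v) (subpath a1 a2 h v) /\
      nhoriz a1 a2 (subpath a1 a2 e v)
        = \sum_(v' <- subpath a1 a2 e v | is_vert a1 a2 v') S2 v')).

Definition norm1 (a1 a2 : nat) (S1 : nat -> nat) : nat :=
  \sum_(h < nedges a1 a2 | is_horiz a1 a2 h) S1 h.
Definition norm2 (a1 a2 : nat) (S2 : nat -> nat) : nat :=
  \sum_(v < nedges a1 a2 | is_vert a1 a2 v) S2 v.

Local Open Scope ring_scope.

Definition pt := (rat * rat)%type.

Definition in_conv_hull (pts : seq pt) (p : pt) : Prop :=
  exists w : nat -> rat,
    (forall i, 0 <= w i) /\
    \sum_(i < size pts) w i = 1 /\
    p.1 = \sum_(i < size pts) w i * (nth (0, 0) pts i).1 /\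
    p.2 = \sum_(i < size pts) w i * (nth (0, 0) pts i).2.

Definition in_hoseg (a b p : pt) : Prop :=
  exists t : rat, 0 < t <= 1 /\
    p.1 = (1 - t) * a.1 + t * b.1 /\ p.2 = (1 - t) * a.2 + t * b.2.

(* Closed region bounded by the simple polygon A -> B -> C -> D -> A, where
   A = (0,0), B on the positive x-axis, C in the open positive quadrant,
   D on the positive y-axis.  The polygon is star-shaped from A with its
   vertices in angular order, so the region is the union of the triangles
   ABC and ACD. *)
Definition in_quad (A B C D p : pt) : Prop :=
  in_conv_hull [:: A; B; C] p \/ in_conv_hull [:: A; C; D] p.

Definition region_c (d1 d2 a1 a2 : nat) (p : pt) : Prop :=
  let A : pt := (0, 0) in
  let B : pt := ((d1 * a1)%:R, 0) in
  let C : pt := (a2%:R, a1%:R) in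
  let D : pt := (0, (d2 * a2)%:R) in
  in_quad A B C D p /\ ~ in_hoseg B C p /\ ~ in_hoseg D C p.

(* Main.v *)
Require Import Defs.
From mathcomp Require Import all_boot all_order all_algebra.
From mathcomp Require Import zify ring lra.
Import Order.TTheory GRing.Theory Num.Theory.
Local Open Scope ring_scope.

Definition pre (f : nat -> int) (q : nat) : int := \sum_(j < q) f j.

Lemma pre0 f : pre f 0 = 0.
Proof. by rewrite /pre big_ord0. Qed.

Lemma preS f q : pre f q.+1 = pre f q + f q.
Proof. by rewrite /pre big_ord_recr. Qed.

Lemma pre_ext f g q : (forall j, (j < q)%N -> f j = g j) -> pre f q = pre g q.
Proof.
elim: q => [|q IH] H; first by rewrite !pre0.
rewrite !preS IH ?H // => j Hj; apply: H; exact: ltnW.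
Qed.

Lemma pre_per f n q : (forall j, f (j + n)%N = f j) -> pre f (q + n) = pre f q + pre f n.
Proof.
move=> Hp; elim: q => [|q IH]; first by rewrite pre0 add0r.
by rewrite addSn !preS IH Hp addrAC.
Qed.

Lemma pre_rev f N q : (q <= N.+1)%N ->
  pre (fun j => f (N - j)%N) q + pre f (N.+1 - q) = pre f N.+1.
Proof.
elim: q => [|q IH] Hq; first by rewrite pre0 subn0 add0r.
rewrite preS -IH; last exact: ltnW.
have -> : (N.+1 - q = (N - q).+1)%N by rewrite subSn //.
rewrite subSS preS; ring.
Qed.

Lemma pre_lin (a b : int) f g q : pre (fun j => a * f j + b * g j) q = a * pre f q + b * pre g q.
Proof.
elim: q => [|q IH]; first by rewrite !pre0 !mulr0 addr0.
rewrite !preS IH; ring.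
Qed.

Lemma pre_mono f q1 q2 : (forall j, 0 <= f j) -> (q1 <= q2)%N -> pre f q1 <= pre f q2.
Proof.
move=> Hf; elim: q2 => [|q IH]; first by rewrite leqn0 => /eqP ->.
rewrite leq_eqVlt => /orP [/eqP -> //| ]; rewrite ltnS => /IH.
rewrite preS => H; have := Hf q; lia.
Qed.

Lemma pre_le f g q : (forall j, (j < q)%N -> f j <= g j) -> pre f q <= pre g q.
Proof.
elim: q => [|q IH] H; first by rewrite !pre0.
rewrite !preS; apply: lerD; [apply: IH => j Hj; apply: H; exact: ltnW | exact: H].
Qed.

Section Argm.
Variable f : nat -> int.
Lemma ex_argmax_first a b : (a <= b)%N -> exists p, [/\ (a <= p <= b)%N,
  (forall q, (a <= q <= b)%N -> f q <= f p) & (forall q, (a <= q < p)%N -> f q < f p)].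
Proof.
move=> Hab; have [m ->] : exists m, b = (a + m)%N by exists (b - a)%N; lia.
elim: m => [|m [p [Hp H1 H2]]].
  exists a; split; first lia. move=> q Hq; have -> : q = a by lia. by [].
  move=> q Hq; lia.
case: (ltrP (f p) (f (a + m.+1)%N)) => Hc.
- exists (a + m.+1)%N; split; first lia.
  + move=> q Hq; case: (leqP q (a + m)%N) => Hq2.
    * have := H1 q; lia.
    * have -> : q = (a + m.+1)%N by lia. by [].
  + move=> q Hq; have := H1 q; lia.
- exists p; split; first lia.
  + move=> q Hq; case: (leqP q (a + m)%N) => Hq2.
    * apply: H1; lia.
    * have -> : q = (a + m.+1)%N by lia. by [].
  + exact: H2.
Qed.

Lemma ex_argmin_last a b : (a <= b)%N -> exists p, [/\ (a <= p <= b)%N,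
  (forall q, (a <= q <= b)%N -> f p <= f q) & (forall q, (p < q <= b)%N -> f p < f q)].
Proof.
move=> Hab; have [m ->] : exists m, b = (a + m)%N by exists (b - a)%N; lia.
elim: m => [|m [p [Hp H1 H2]]].
  exists a; split; first lia. move=> q Hq; have -> : q = a by lia. by [].
  move=> q Hq; lia.
case: (ltrP (f p) (f (a + m.+1)%N)) => Hc.
- exists p; split; first lia.
  + move=> q Hq; case: (leqP q (a + m)%N) => Hq2.
    * apply: H1; lia.
    * have -> : q = (a + m.+1)%N by lia. exact: ltW.
  + move=> q Hq; case: (leqP q (a + m)%N) => Hq2.
    * apply: H2; lia.
    * have -> : q = (a + m.+1)%N by lia. by [].
- exists (a + m.+1)%N; split; first lia.
  + move=> q Hq; case: (leqP q (a + m)%N) => Hq2.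
    * have := H1 q; lia.
    * have -> : q = (a + m.+1)%N by lia. by [].
  + move=> q Hq; lia.
Qed.
End Argm.

Section Core.
Variables (up : nat -> bool) (wt : nat -> nat).
Definition pstep j : int := if up j then (wt j)%:Z else -1.
Definition qstep j : int := if up j then -1 else (wt j)%:Z.
Definition P := pre pstep.
Definition Q := pre qstep.
Definition cU := pre (fun j => (nat_of_bool (up j))%:Z).
Definition cD := pre (fun j => (nat_of_bool (~~ up j))%:Z).
Definition SU := pre (fun j => if up j then (wt j)%:Z else 0).
Definition SD := pre (fun j => if up j then 0 else (wt j)%:Z).

Lemma PE q : P q = SU q - cD q.
Proof.
rewrite /P /SU /cD; elim: q => [|q IH]; first by rewrite !pre0 subr0.
by rewrite !preS IH /pstep; case: (up q) => /=; ring.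
Qed.
Lemma QE q : Q q = SD q - cU q.
Proof.
rewrite /Q /SD /cU; elim: q => [|q IH]; first by rewrite !pre0 subr0.
by rewrite !preS IH /qstep; case: (up q) => /=; ring.
Qed.
Lemma cUD q : cU q + cD q = q%:Z.
Proof.
rewrite /cU /cD; elim: q => [|q IH]; first by rewrite !pre0.
rewrite !preS; case: (up q) => /=; lia.
Qed.
Lemma PS q : P q.+1 = P q + pstep q. Proof. exact: preS. Qed.
Lemma QS q : Q q.+1 = Q q + qstep q. Proof. exact: preS. Qed.
Lemma cUS q : cU q.+1 = cU q + (nat_of_bool (up q))%:Z. Proof. exact: preS. Qed.
Lemma cDS q : cD q.+1 = cD q + (nat_of_bool (~~ up q))%:Z. Proof. exact: preS. Qed.
Lemma SUS q : SU q.+1 = SU q + (if up q then (wt q)%:Z else 0). Proof. exact: preS. Qed.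
Lemma SDS q : SD q.+1 = SD q + (if up q then 0 else (wt q)%:Z). Proof. exact: preS. Qed.

Lemma cU_mono q1 q2 : (q1 <= q2)%N -> cU q1 <= cU q2.
Proof. apply: pre_mono => j; lia. Qed.
Lemma cD_mono q1 q2 : (q1 <= q2)%N -> cD q1 <= cD q2.
Proof. apply: pre_mono => j; lia. Qed.
Lemma SU_mono q1 q2 : (q1 <= q2)%N -> SU q1 <= SU q2.
Proof. apply: pre_mono => j; case: (up j) => //; lia. Qed.
Lemma SD_mono q1 q2 : (q1 <= q2)%N -> SD q1 <= SD q2.
Proof. apply: pre_mono => j; case: (up j) => //; lia. Qed.

Definition compat_lin lo hi := forall h v, (lo <= h)%N -> (h < v)%N -> (v < hi)%N ->
  ~~ up h -> up v -> exists k, (k < v - h)%N /\ (Q (h + k.+1) = Q h \/ P v.+1 = P (v - k)).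

Lemma block_Q lo hi i t : compat_lin lo hi -> (lo <= i)%N -> (i < t)%N -> (t <= hi)%N ->
  ~~ up i -> (forall q, (i < q < t)%N -> P q < P i) -> P t = P i -> Q t < Q i.
Proof.
move=> Hc Hli Hit Hth Hui Hin Heq.
have Pi1 : P i.+1 = P i - 1 by rewrite PS /pstep (negbTE Hui).
have Ht2 : (i.+1 < t)%N.
  rewrite ltn_neqAle Hit andbT; apply/eqP => E; move: Heq; rewrite -E Pi1; lia.
have [v Ev] : exists v, t = v.+1 by exists t.-1; lia.
subst t.
have Huv : up v.
  have := Hin v; rewrite PS /pstep in Heq; move: Heq; case: (up v) => // Heq H.
  have := H ltac:(lia); lia.
rewrite ltNge; apply/negP => HQ.
have [h [Hh H1 H2]] := @ex_argmin_last Q i v ltac:(lia).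
have Hhv : (h < v)%N.
  rewrite ltn_neqAle; move: Hh => /andP [_ ->]; rewrite andbT; apply/eqP => E; subst h.
  have := H1 i ltac:(lia); move: HQ; rewrite QS /qstep Huv; lia.
have Huh : ~~ up h.
  have := H2 h.+1 ltac:(lia); rewrite QS /qstep; case: (up h) => //; lia.
have [k [Hk [E|E]]] := Hc h v ltac:(lia) Hhv ltac:(lia) Huh Huv.
- have := H2 (h + k.+1)%N ltac:(lia); rewrite E; lia.
- have := Hin (v - k)%N ltac:(lia); rewrite -E Heq; lia.
Qed.

Lemma decomp (Phi : nat -> int) (bb : bool) lo hi : (lo <= hi)%N ->
  (forall q, (lo <= q <= hi)%N -> P q <= P lo) ->
  (forall j, (lo <= j < hi)%N -> ~~ up j -> Phi j <= Phi j.+1) ->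
  (forall j, (lo <= j < hi)%N -> up j -> wt j = 0%N -> Phi j <= Phi j.+1) ->
  (forall i t, (lo <= i)%N -> (i < t)%N -> (t <= hi)%N -> ~~ up i ->
     (forall q, (i < q < t)%N -> P q < P i) -> P t = P i ->
     Phi i + (nat_of_bool bb)%:Z <= Phi t) ->
  Phi lo <= Phi hi /\ (bb -> (exists j, [/\ (lo <= j < hi)%N, up j & (0 < wt j)%N]) -> Phi lo < Phi hi).
Proof.
move=> Hlh; move: {-1}(hi - lo)%N (leqnn (hi - lo)) => m; elim: m lo Hlh => [|m IH] lo Hlh Hm Hmax Hd Hu Hb.
  have -> : lo = hi by lia. split => // _ [j [Hj _ _]]; lia.
case: (leqP hi lo) => Hhl.
  have -> : lo = hi by lia. split => // _ [j [Hj _ _]]; lia.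
case Hul: (up lo).
-
  have Hw0 : wt lo = 0%N.
    have := Hmax lo.+1 ltac:(lia); rewrite PS /pstep Hul; lia.
  have [IH1 IH2] := IH lo.+1 ltac:(lia) ltac:(lia)
    ltac:(move=> q Hq; have := Hmax q ltac:(lia); rewrite PS /pstep Hul Hw0; lia)
    ltac:(move=> j Hj; apply: Hd; lia) ltac:(move=> j Hj; apply: Hu; lia)
    ltac:(move=> i t Hi; apply: Hb; lia).
  have Hl := Hu lo ltac:(lia) Hul Hw0.
  split; first lia.
  move=> Hbb [j [Hj Huj Hwj]]; have Hjl : j != lo by apply/eqP => E; subst j; lia.
  have := IH2 Hbb ltac:(exists j; split => //; lia); lia.
- have Hdl : ~~ up lo by rewrite Hul.
  have Pl1 : P lo.+1 = P lo - 1 by rewrite PS /pstep Hul.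
  case: (boolP (has (fun q => P lo <= P q) (iota lo.+1 (hi - lo)))) => Hhas.
  + have Hex : exists q, (lo < q <= hi)%N && (P lo <= P q).
      move/hasP: Hhas => [q]; rewrite mem_iota => Hq Hq2; exists q; rewrite Hq2 andbT; lia.
    case: (ex_minnP Hex) => t /andP [Ht HPt] Hmin.
    have HPt' : P t = P lo by have := Hmax t ltac:(lia); lia.
    have Hin : forall q, (lo < q < t)%N -> P q < P lo.
      move=> q Hq; rewrite ltNge; apply/negP => Hq2.
      have := Hmin q ltac:(apply/andP; split => //; lia); lia.
    have Hblk := Hb lo t (leqnn _) ltac:(lia) ltac:(lia) Hdl Hin HPt'.
    have [IH1 _] := IH t ltac:(lia) ltac:(lia)
      ltac:(move=> q Hq; rewrite HPt'; apply: Hmax; lia)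
      ltac:(move=> j Hj; apply: Hd; lia) ltac:(move=> j Hj; apply: Hu; lia)
      ltac:(move=> i t' Hi; apply: Hb; lia).
    have Hbb0 : 0 <= (nat_of_bool bb)%:Z by [].
    split; first lia.
    move=> Hbb _; move: Hblk; rewrite Hbb /=; lia.
  + have Hlt : forall q, (lo < q <= hi)%N -> P q < P lo.
      move=> q Hq; rewrite ltNge; apply/negP => Hq2; move/negP: Hhas; apply.
      apply/hasP; exists q => //; rewrite mem_iota; lia.
    have [IH1 IH2] := IH lo.+1 ltac:(lia) ltac:(lia)
      ltac:(move=> q Hq; rewrite Pl1; have := Hlt q ltac:(lia); lia)
      ltac:(move=> j Hj; apply: Hd; lia) ltac:(move=> j Hj; apply: Hu; lia)
      ltac:(move=> i t Hi; apply: Hb; lia).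
    have Hl := Hd lo ltac:(lia) Hdl.
    split; first lia.
    move=> Hbb [j [Hj Huj Hwj]]; have Hjl : j != lo by apply/eqP => E; subst j; rewrite Hul in Huj.
    have := IH2 Hbb ltac:(exists j; split => //; lia); lia.
Qed.

End Core.

Lemma pre_scale (c : int) f q : pre (fun j => c * f j) q = c * pre f q.
Proof. elim: q => [|q IH]; first by rewrite !pre0 mulr0. by rewrite !preS IH mulrDr. Qed.

Lemma pre_win f g a b : (a <= b)%N -> (forall j, (a <= j < b)%N -> f j <= g j) ->
  pre f b - pre f a <= pre g b - pre g a.
Proof.
move=> Hab; have [m ->] : exists m, b = (a + m)%N by exists (b - a)%N; lia.
elim: m => [|m IH] H; first by rewrite addn0 !subrr.
rewrite addnS !preS; have := IH ltac:(move=> j Hj; apply: H; lia).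
have := H (a + m)%N ltac:(lia); lia.
Qed.

Section Core3.
Variables (up : nat -> bool) (wt : nat -> nat).
Local Notation P := (P up wt).
Local Notation Q := (Q up wt).
Local Notation cU := (cU up).
Local Notation cD := (cD up).
Local Notation SU := (SU up wt).
Local Notation SD := (SD up wt).

Lemma SU_win d a b : (a <= b)%N -> (forall j, (a <= j < b)%N -> up j -> (wt j <= d)%N) ->
  SU b - SU a <= d%:Z * (cU b - cU a).
Proof.
move=> Hab H; rewrite mulrBr /cU -!pre_scale; apply: pre_win => // j Hj.
case E: (up j) => /=; last by lia.
have := H j Hj E; lia.
Qed.

Lemma SD_win d a b : (a <= b)%N -> (forall j, (a <= j < b)%N -> ~~ up j -> (wt j <= d)%N) ->
  SD b - SD a <= d%:Z * (cD b - cD a).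
Proof.
move=> Hab H; rewrite mulrBr /cD -!pre_scale; apply: pre_win => // j Hj.
case E: (up j) => /=; first by lia.
have := H j Hj (negbT E); lia.
Qed.

Lemma cU_const a b : (a <= b)%N -> (forall j, (a <= j < b)%N -> ~~ up j) -> cU b = cU a.
Proof.
move=> Hab; have [m ->] : exists m, b = (a + m)%N by exists (b - a)%N; lia.
elim: m => [|m IH] H; first by rewrite addn0.
rewrite addnS cUS IH; last by move=> j Hj; apply: H; lia.
by rewrite (negbTE (H (a+m)%N ltac:(lia))) addr0.
Qed.

Lemma block_one_up (A B : int) (d : nat) i t :
  (i < t)%N -> 0 <= B -> B * d%:Z <= A ->
  (forall j, (i <= j < t)%N -> up j -> (wt j <= d)%N) ->
  (forall p, (i <= p)%N -> (p.+1 < t)%N -> up p ->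
     A * (cU t - cU p.+1) < B * (cD t - cD p.+1 + 1)) ->
  (forall q, (i < q < t)%N -> P q < P i) -> P t = P i ->
  cU t - cU i <= 1.
Proof.
move=> Hit HB HBA Hw Hg Hin Heq.
have Hno : forall p, (i <= p < t.-1)%N -> ~~ up p.
  move=> p Hp; apply/negP => Hup.
  have H1 := Hin p.+1 ltac:(lia).
  have H2 := SU_win d (p.+1) t ltac:(lia) ltac:(move=> j Hj; apply: Hw; lia).
  have H3 := Hg p ltac:(lia) ltac:(lia) Hup.
  have H4 := cU_mono up (p.+1) t ltac:(lia).
  have H5 := cD_mono up (p.+1) t ltac:(lia).
  move: H1; rewrite -Heq !PE => H1.
  nia.
have E := cU_const (i) (t.-1) ltac:(lia) Hno.
have -> : t = (t.-1).+1 by lia.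
rewrite cUS E; case: (up t.-1) => /=; lia.
Qed.
End Core3.

Section Dyck.
Variables a1 a2 : nat.
Definition cnd (s : nat * nat) := (s.2 < a2)%N && (s.2.+1 * a1 <= a2 * s.1)%N.
Definition stepf (s : nat * nat) := if cnd s then (s.1, s.2.+1) else (s.1.+1, s.2).

Lemma size_dyck_aux f x y : size (dyck_aux f x y a1 a2) = f.
Proof. by elim: f x y => [|f IH] x y //=; case: ifP => _ /=; rewrite IH. Qed.

Lemma nth_dyck_aux f x y i : (i < f)%N ->
  nth false (dyck_aux f x y a1 a2) i = cnd (iter i stepf (x, y)).
Proof.
elim: f x y i => [|f IH] x y i //= Hi.
case: i Hi => [|i] Hi.
  by rewrite /= /cnd /=; case: ifP.
rewrite iterSr /stepf /cnd /=.
by case: ifP => Hc /=; rewrite IH.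
Qed.

Definition nn := (a1 + a2)%N.
Lemma size_dyck : size (dyck a1 a2) = nn.
Proof. exact: size_dyck_aux. Qed.

Lemma nth_dyck i : (i < nn)%N -> nth false (dyck a1 a2) i = cnd (iter i stepf (0, 0)%N).
Proof. exact: nth_dyck_aux. Qed.

Lemma inv_state q : (q <= nn)%N ->
  let s := iter q stepf (0, 0)%N in
  [/\ (s.1 + s.2 = q)%N, (s.1 <= a1)%N, (s.2 <= a2)%N,
      (a1 * s.2 <= a2 * s.1)%N & (0 < nn)%N -> (a2 * s.1 < a1 * s.2 + a1 + a2)%N].
Proof.
elim: q => [|q IH] Hq /=.
  split => //; rewrite ?muln0 //.
have [E1 E2 E3 E4 E5] := IH (ltnW Hq).
move: E1 E2 E3 E4 E5; set s := iter q stepf (0,0)%N => E1 E2 E3 E4 E5.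
rewrite /stepf /cnd.
case: s E1 E2 E3 E4 E5 => x y /= E1 E2 E3 E4 E5.
case: ifP => /= Hc.
  move/andP: Hc => [Hc1 Hc2]; split; try lia; move=> Hn; have := E5 Hn; nia.
have Hx : (x < a1)%N.
  rewrite ltn_neqAle E2 andbT; apply/eqP => Ex; subst x.
  move: Hc; rewrite /nn in Hq.
  have -> : (y < a2)%N by lia.
  have -> : (y.+1 * a1 <= a2 * a1)%N by nia.
  by [].
move: Hc => /negP /negP; rewrite negb_and -!ltnNge => /orP [H|H]; split; try lia; try nia.
Qed.

Lemma step_down q : (q < nn)%N -> ~~ cnd (iter q stepf (0,0)%N) ->
  let s := iter q stepf (0, 0)%N in (a2 * s.1 < a1 * s.2 + a1)%N.
Proof.
move=> Hq /= Hc.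
have [E1 E2 E3 E4 E5] := @inv_state q (ltnW Hq).
move: E1 E2 E3 E4 E5 Hc; set s := iter q stepf (0,0)%N.
case: s => x y /= E1 E2 E3 E4 E5 Hc.
have Hx : (x < a1)%N.
  rewrite ltn_neqAle E2 andbT; apply/eqP => Ex; subst x.
  move: Hc; rewrite /cnd /= /nn in Hq *.
  have -> : (y < a2)%N by lia.
  have -> : (y.+1 * a1 <= a2 * a1)%N by nia.
  by [].
move: Hc; rewrite /cnd /= negb_and -!ltnNge => /orP [H|H]; nia.
Qed.
End Dyck.

Section Inst.
Variables a1 a2 : nat.
Local Notation n := (nn a1 a2).
Definition wd j := nth false (dyck a1 a2) (j %% n).
Definition X := cD wd.
Definition Y := cU wd.

Lemma wd_per j : wd (j + n) = wd j.
Proof. by rewrite /wd modnDr. Qed.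

Lemma XY_state q : (q <= n)%N ->
  X q = ((iter q (stepf a1 a2) (0,0)%N).1)%:Z /\ Y q = ((iter q (stepf a1 a2) (0,0)%N).2)%:Z.
Proof.
rewrite /X /Y; elim: q => [|q IH] Hq; first by rewrite /cD /cU !pre0.
have [IH1 IH2] := IH (ltnW Hq).
rewrite cDS cUS IH1 IH2 /wd modn_small // nth_dyck //= /stepf.
by case: (cnd a1 a2 _) => /=; split; lia.
Qed.

Lemma XYn : (0 < n)%N -> X n = a1%:Z /\ Y n = a2%:Z.
Proof.
move=> Hn; have [H1 H2] := @XY_state n (leqnn n).
have [E1 E2 E3 _ _] := @inv_state a1 a2 n (leqnn n).
rewrite H1 H2; move: E1 E2 E3; rewrite /nn; split; lia.
Qed.

Lemma XYk r k : (0 < n)%N -> X (r + k * n) = X r + k%:Z * a1%:Z /\ Y (r + k * n) = Y r + k%:Z * a2%:Z.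
Proof.
move=> Hn; have [Xn Yn] := XYn Hn.
elim: k => [|k [IH1 IH2]]; first by rewrite mul0n addn0 !mul0r !addr0.
have -> : (r + k.+1 * n = (r + k * n) + n)%N by rewrite mulSn; lia.
have EX : forall m, X (m + n) = X m + X n.
  by move=> m; rewrite /X /cD; apply: pre_per => j; rewrite wd_per.
have EY : forall m, Y (m + n) = Y m + Y n.
  by move=> m; rewrite /Y /cU; apply: pre_per => j; rewrite wd_per.
rewrite EX EY IH1 IH2 Xn Yn; split; lia.
Qed.

Lemma inv_all q : (0 < n)%N -> [/\ a1%:Z * Y q <= a2%:Z * X q,
  a2%:Z * X q < a1%:Z * Y q + a1%:Z + a2%:Z &
  ~~ wd q -> a2%:Z * X q < a1%:Z * Y q + a1%:Z].
Proof.
move=> Hn.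
have Hq : q = (q %% n + (q %/ n) * n)%N by rewrite addnC -divn_eq.
have Hr : (q %% n < n)%N by rewrite ltn_mod.
have [Ex Ey] := XYk (q %% n) (q %/ n) Hn.
have [Sx Sy] := @XY_state _ (ltnW Hr).
have [E1 E2 E3 E4 E5] := @inv_state a1 a2 _ (ltnW Hr).
have W : wd q = cnd a1 a2 (iter (q %% n) (stepf a1 a2) (0,0)%N) by rewrite /wd nth_dyck.
have SD := @step_down a1 a2 (q %% n) Hr.
move: Ex Ey Sx Sy E1 E2 E3 E4 E5 W SD; rewrite -Hq.
set s := iter _ _ _; case: s => x y /= Ex Ey Sx Sy E1 E2 E3 E4 E5 W SD.
rewrite Ex Ey Sx Sy W.
split.
- nia.
- have := E5 Hn; nia.
- move=> /SD H; nia.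
Qed.

Lemma X_mono q1 q2 : (q1 <= q2)%N -> X q1 <= X q2. Proof. exact: cD_mono. Qed.
Lemma Y_mono q1 q2 : (q1 <= q2)%N -> Y q1 <= Y q2. Proof. exact: cU_mono. Qed.

Lemma W1 i t : (0 < n)%N -> ~~ wd i -> (i <= t)%N ->
  a1%:Z * (Y t - Y i) < a2%:Z * (X t - X i) + a1%:Z.
Proof.
move=> Hn Hi Hit; have [A1 _ _] := inv_all t Hn; have [_ _ A3] := inv_all i Hn.
have := A3 Hi; nia.
Qed.

Lemma W2 s e : (0 < n)%N -> wd e -> (s <= e)%N ->
  a2%:Z * (X e.+1 - X s) < a1%:Z * (Y e.+1 - Y s) + a2%:Z.
Proof.
move=> Hn He Hse; have [A1 _ _] := inv_all s Hn; have [_ A2 _] := inv_all e Hn.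
have -> : X e.+1 = X e by rewrite /X cDS He /= addr0.
have -> : Y e.+1 = Y e + 1 by rewrite /Y cUS He.
nia.
Qed.

Lemma W3 p t : (0 < n)%N -> wd p -> (p < t)%N ->
  a1%:Z * (Y t - Y p.+1) < a2%:Z * (X t - X p.+1 + 1).
Proof.
move=> Hn Hp Hpt; have [A1 _ _] := inv_all t Hn; have [_ A2 _] := inv_all p Hn.
have -> : X p.+1 = X p by rewrite /X cDS Hp /= addr0.
have -> : Y p.+1 = Y p + 1 by rewrite /Y cUS Hp.
nia.
Qed.

Lemma W4 s e : (0 < n)%N -> ~~ wd e -> (s <= e)%N ->
  a2%:Z * (X e - X s) < a1%:Z * (Y e - Y s + 1).
Proof.
move=> Hn He Hse; have [A1 _ _] := inv_all s Hn; have [_ _ A3] := inv_all e Hn.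
have := A3 He; nia.
Qed.
End Inst.

Lemma infix_same_size (T : eqType) (s1 s2 : seq T) : infix s1 s2 -> size s1 = size s2 -> s1 = s2.
Proof.
move/infixP => [s [s' ->]]; rewrite !size_cat => E.
have Hs : size s = 0%N by lia.
have Hs' : size s' = 0%N by lia.
by move/size0nil: Hs => ->; move/size0nil: Hs' => ->; rewrite /= cats0.
Qed.

Lemma count_map_iota (p : pred nat) g M : count p (map g (iota 0 M)) = (\sum_(k < M) nat_of_bool (p (g k)))%N.
Proof.
elim: M => [|M IH]; first by rewrite big_ord0.
have E : iota 0 M.+1 = iota 0 M ++ [:: M] by rewrite -addn1 iotaD.
by rewrite big_ord_recr E map_cat count_cat IH /= addn0.
Qed.

Lemma big_recr_cond (p : pred nat) (F : nat -> nat) M :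
  (\sum_(k < M.+1 | p k) F k = \sum_(k < M | p k) F k + (if p M then F M else 0))%N.
Proof. by rewrite big_mkcond big_ord_recr /= -big_mkcond. Qed.

Lemma sum_map_iota (p : pred nat) g (F : nat -> nat) M :
  (\sum_(x <- map g (iota 0 M) | p x) F x = \sum_(k < M | p (g k)) F (g k))%N.
Proof.
elim: M => [|M IH]; first by rewrite big_ord0 big_nil.
have E : iota 0 M.+1 = iota 0 M ++ [:: M] by rewrite -addn1 iotaD.
rewrite (big_recr_cond (fun k => p (g k)) (fun k => F (g k))) E map_cat big_cat IH /= big_cons big_nil.
by case: (p (g M)) => //; rewrite addn0.
Qed.

Lemma pre_shift f a M : pre f (a + M) = pre f a + pre (fun k => f (a + k)%N) M.
Proof.
elim: M => [|M IH]; first by rewrite addn0 pre0 addr0.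
by rewrite addnS !preS IH addrA.
Qed.

Section CompatInst.
Variables (a1 a2 : nat) (S1 S2 : nat -> nat).
Local Notation n := (nn a1 a2).
Local Notation w := (wd a1 a2).
Definition wt j := if w j then S2 (j %% n)%N else S1 (j %% n)%N.
Local Notation P := (P w wt).
Local Notation Q := (Q w wt).

Lemma nedgesE : nedges a1 a2 = n. Proof. exact: size_dyck. Qed.

Lemma is_vert_mod j : (0 < n)%N -> is_vert a1 a2 (j %% n)%N = w j.
Proof. by move=> Hn; rewrite /is_vert nedgesE ltn_mod Hn /wd. Qed.
Lemma is_horiz_mod j : (0 < n)%N -> is_horiz a1 a2 (j %% n)%N = ~~ w j.
Proof. by move=> Hn; rewrite /is_horiz nedgesE ltn_mod Hn /wd. Qed.

Lemma fwd_sum a c M : (0 < n)%N -> (a %% n = c %% n)%N ->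
  pre (fun k => qstep w wt (a + k)%N) M =
  (\sum_(k < M | is_horiz a1 a2 ((c + k) %% n)%N) S1 ((c + k) %% n)%N)%:Z
  - (\sum_(k < M) nat_of_bool (is_vert a1 a2 ((c + k) %% n)%N))%:Z.
Proof.
move=> Hn Hac; elim: M => [|M IH]; first by rewrite pre0 !big_ord0.
have E : ((c + M) %% n = (a + M) %% n)%N by rewrite -modnDml -Hac modnDml.
rewrite preS IH (big_recr_cond (fun k => is_horiz a1 a2 ((c + k) %% n)%N) (fun k => S1 ((c+k) %% n)%N)) big_ord_recr /= E is_horiz_mod // is_vert_mod // /qstep /wt.
case: (w (a + M)%N) => /=; rewrite ?addn0 PoszD; ring.
Qed.

Lemma bwd_sum a c M : (0 < n)%N -> (a %% n = c %% n)%N ->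
  pre (fun k => pstep w wt (a + k)%N) M =
  (\sum_(k < M | is_vert a1 a2 ((c + k) %% n)%N) S2 ((c + k) %% n)%N)%:Z
  - (\sum_(k < M) nat_of_bool (is_horiz a1 a2 ((c + k) %% n)%N))%:Z.
Proof.
move=> Hn Hac; elim: M => [|M IH]; first by rewrite pre0 !big_ord0.
have E : ((c + M) %% n = (a + M) %% n)%N by rewrite -modnDml -Hac modnDml.
rewrite preS IH (big_recr_cond (fun k => is_vert a1 a2 ((c + k) %% n)%N) (fun k => S2 ((c+k) %% n)%N)) big_ord_recr /= E is_horiz_mod // is_vert_mod // /pstep /wt.
case: (w (a + M)%N) => /=; rewrite ?addn0 PoszD; ring.
Qed.

Lemma mod_diff x e : (e < n)%N -> ((x + n - e) %% n + e == x %[mod n])%N.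
Proof.
move=> He; apply/eqP; rewrite modnDml.
have -> : (x + n - e + e = x + n)%N by lia.
by rewrite modnDr.
Qed.

Lemma subpathE a b : subpath a1 a2 a b = map (fun k => (a + k) %% n)%N (iota 0 ((b + n - a) %% n)%N.+1).
Proof. by rewrite /subpath nedgesE. Qed.

Lemma compat_all : compatible a1 a2 S1 S2 -> (0 < n)%N ->
  forall h v, (h < v)%N -> (v < h + n)%N -> ~~ w h -> w v ->
  exists k, (k < v - h)%N /\ (Q (h + k.+1) = Q h \/ P v.+1 = P (v - k)).
Proof.
move=> Hc Hn h v Hhv Hvh Hh Hv.
have Hd : (v - h < n)%N by lia.
have Hhv' : (h <= v)%N by exact: ltnW.
set h0 := (h %% n)%N; set v0 := (v %% n)%N.
have Hh0 : (h0 < n)%N by rewrite ltn_mod.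
have Hv0 : (v0 < n)%N by rewrite ltn_mod.
have Hhz : is_horiz a1 a2 h0 by rewrite is_horiz_mod.
have Hvz : is_vert a1 a2 v0 by rewrite is_vert_mod.
have HL : ((v0 + n - h0) %% n = v - h)%N.
  have E1 := @mod_diff v0 h0 Hh0.
  have E2 : ((v - h) + h0 == v0 %[mod n])%N.
    by rewrite /h0 /v0 modnDmr modn_mod subnK.
  have E3 : ((v0 + n - h0) %% n == (v - h) %[mod n])%N.
    by rewrite -(eqn_modDr h0) (eqP E1) eq_sym (eqP E2) modn_mod.
  have Hs : ((v - h) %% n = v - h)%N by rewrite modn_small.
  by move: E3; rewrite modn_mod Hs => /eqP.
have [e [He [[Hp Heq]|[Hp Heq]]]] := Hc h0 v0 Hhz Hvz; rewrite nedgesE in He.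
- set K := ((e + n - h0) %% n)%N.
  move: Hp Heq; rewrite /proper_subpath /nvert !subpathE HL -/K => /andP [Hinf Hne] Heq.
  have Hsz := size_infix Hinf; rewrite !size_map !size_iota in Hsz.
  have HK : (K < v - h)%N.
    rewrite ltn_neqAle -ltnS Hsz andbT; apply/eqP => EK.
    by move/negP: Hne; apply; rewrite EK.
  exists K; split => //; left.
  have F := fwd_sum h h0 K.+1 Hn (esym (modn_mod h n)).
  rewrite /Q (pre_shift _ h K.+1) -/Q F.
  move: Heq; rewrite count_map_iota sum_map_iota => ->.
  by rewrite subrr addr0.
- set K := ((v0 + n - e) %% n)%N.
  move: Hp Heq; rewrite /proper_subpath /nhoriz !subpathE HL -/K => /andP [Hinf Hne] Heq.
  have Hsz := size_infix Hinf; rewrite !size_map !size_iota in Hsz.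
  have HK : (K < v - h)%N.
    rewrite ltn_neqAle -ltnS Hsz andbT; apply/eqP => EK.
    have Hsz2 : size (map (fun k => (e + k) %% n)%N (iota 0 K.+1)) =
       size (map (fun k => (h0 + k) %% n)%N (iota 0 (v - h).+1)) by rewrite !size_map !size_iota EK.
    by move: Hne; rewrite (@infix_same_size _ _ _ Hinf Hsz2) eqxx.
  exists K; split => //; right.
  have Ea : ((v - K) %% n = e %% n)%N.
    apply/eqP; rewrite -(eqn_modDr K).
    have -> : (v - K + K = v)%N by clear -HK Hhv; lia.
    have E1 := @mod_diff v0 e He.
    by rewrite -/K in E1; rewrite [(e + K)%N]addnC (eqP E1) /v0 modn_mod eqxx.
  have F := bwd_sum (v - K) e K.+1 Hn Ea.
  have EE : (v.+1 = v - K + K.+1)%N by clear -HK Hhv; lia.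
  rewrite EE /P (pre_shift _ (v - K) K.+1) -/P F.
  move: Heq; rewrite count_map_iota sum_map_iota => ->.
  by rewrite subrr addr0.
Qed.
End CompatInst.

Lemma pre_pos_ex f m : 0 < pre f m -> exists j, (j < m)%N /\ 0 < f j.
Proof.
elim: m => [|m IH]; first by rewrite pre0.
rewrite preS => H; case: (ltrP 0 (f m)) => Hm; first by exists m.
have [j [Hj Hf]] := IH ltac:(lia); exists j; split => //; lia.
Qed.

Section Main.
Variables (a1 a2 d1 d2 : nat) (S1 S2 : nat -> nat).
Local Notation n := (nn a1 a2).
Local Notation w := (wd a1 a2).
Local Notation wt := (wt a1 a2 S1 S2).
Local Notation P := (P w wt).
Local Notation Q := (Q w wt).
Local Notation cU := (cU w).
Local Notation cD := (cD w).
Local Notation SU := (SU w wt).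
Local Notation SD := (SD w wt).

Lemma wt_per j : wt (j + n) = wt j.
Proof. by rewrite /wt wd_per modnDr. Qed.

Lemma P_per q : P (q + n) = P q + P n.
Proof. by apply: pre_per => j; rewrite /pstep wd_per wt_per. Qed.
Lemma Q_per q : Q (q + n) = Q q + Q n.
Proof. by apply: pre_per => j; rewrite /qstep wd_per wt_per. Qed.
Lemma cU_per q : cU (q + n) = cU q + cU n.
Proof. by apply: pre_per => j; rewrite wd_per. Qed.
Lemma cD_per q : cD (q + n) = cD q + cD n.
Proof. by apply: pre_per => j; rewrite wd_per. Qed.
Lemma SU_per q : SU (q + n) = SU q + SU n.
Proof. by apply: pre_per => j; rewrite wd_per wt_per. Qed.
Lemma SD_per q : SD (q + n) = SD q + SD n.
Proof. by apply: pre_per => j; rewrite wd_per wt_per. Qed.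

Lemma SD_norm1 : (0 < n)%N -> SD n = (norm1 a1 a2 S1)%:Z.
Proof.
move=> Hn; rewrite /norm1 nedgesE.
have : (n <= n)%N by []; elim: {-2}n => [|m IH] Hm; first by rewrite /SD pre0 big_ord0.
rewrite SDS IH ?(ltnW Hm) // (big_recr_cond (fun k => is_horiz a1 a2 k) S1).
have Hmm : (m %% n = m)%N by rewrite modn_small.
have := is_horiz_mod a1 a2 m Hn; rewrite Hmm => ->.
rewrite /wt Hmm; case: (w m) => /=; lia.
Qed.

Lemma SU_norm2 : (0 < n)%N -> SU n = (norm2 a1 a2 S2)%:Z.
Proof.
move=> Hn; rewrite /norm2 nedgesE.
have : (n <= n)%N by []; elim: {-2}n => [|m IH] Hm; first by rewrite /SU pre0 big_ord0.
rewrite SUS IH ?(ltnW Hm) // (big_recr_cond (fun k => is_vert a1 a2 k) S2).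
have Hmm : (m %% n = m)%N by rewrite modn_small.
have := is_vert_mod a1 a2 m Hn; rewrite Hmm => ->.
rewrite /wt Hmm; case: (w m) => /=; lia.
Qed.

Lemma bnd_down : (forall h, is_horiz a1 a2 h -> (S1 h <= d1)%N) -> (0 < n)%N ->
  forall j, ~~ w j -> (wt j <= d1)%N.
Proof.
move=> H Hn j Hj; rewrite /wt (negbTE Hj); apply: H; by rewrite is_horiz_mod.
Qed.
Lemma bnd_up : (forall v, is_vert a1 a2 v -> (S2 v <= d2)%N) -> (0 < n)%N ->
  forall j, w j -> (wt j <= d2)%N.
Proof.
move=> H Hn j Hj; rewrite /wt Hj; apply: H; by rewrite is_vert_mod.
Qed.

Lemma orig_rot : (0 < n)%N -> P n <= 0 ->
  exists r, (r <= n)%N /\ forall q, (r <= q <= r + n)%N -> P q <= P r.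
Proof.
move=> Hn HPn.
have [r [Hr H1 _]] := @ex_argmax_first P 0 n (leq0n n).
exists r; split; first lia.
move=> q Hq; case: (leqP q n) => Hqn; first by apply: H1; lia.
have E : q = ((q - n) + n)%N by lia.
rewrite E P_per; have := H1 (q - n)%N ltac:(lia); lia.
Qed.

Lemma orig_compat r : compatible a1 a2 S1 S2 -> (0 < n)%N -> compat_lin w wt r (r + n).
Proof.
move=> Hc Hn h v Hrh Hhv Hvr Hh Hv.
have Hvh : (v < h + n)%N by lia.
exact: (@compat_all a1 a2 S1 S2 Hc Hn h v Hhv Hvh Hh Hv).
Qed.

Lemma up_in_window r : (r <= n)%N -> (0 < n)%N -> 0 < SU n ->
  exists j, [/\ (r <= j < r + n)%N, w j & (0 < wt j)%N].
Proof.
move=> Hrn Hn Hy; have [j [Hj Hf]] := @pre_pos_ex _ n Hy.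
move: Hf; case E: (w j) => //= Hf.
have Hf' : (0 < wt j)%N by lia.
case: (leqP r j) => Hrj.
  by exists j; split => //; lia.
exists (j + n)%N; split; [lia | by rewrite wd_per | rewrite wt_per; lia].
Qed.

End Main.

Section Main2.
Variables (a1 a2 d1 d2 : nat) (S1 S2 : nat -> nat).
Local Notation n := (nn a1 a2).
Local Notation w := (wd a1 a2).
Local Notation wt := (wt a1 a2 S1 S2).
Local Notation P := (P w wt).
Local Notation Q := (Q w wt).
Local Notation cU := (cU w).
Local Notation cD := (cD w).
Local Notation SU := (SU w wt).
Local Notation SD := (SD w wt).

Lemma L1 : compatible a1 a2 S1 S2 -> (0 < n)%N ->
  (forall h, is_horiz a1 a2 h -> (S1 h <= d1)%N) ->
  SU n <= cD n -> 0 < SU n ->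
  0 < (a1 * d1)%:Z * cD n - (a1%:Z * d1%:Z - a2%:Z) * SU n - a1%:Z * SD n.
Proof.
move=> Hc Hn Hb1 Hy Hy0.
have HPn : P n <= 0 by rewrite PE; lia.
have [r [Hr Hmax]] := orig_rot a1 a2 S1 S2 Hn HPn.
set Phi := fun q => (a1 * d1)%:Z * cD q - (a1%:Z * d1%:Z - a2%:Z) * SU q - a1%:Z * SD q.
have Hper : Phi (r + n)%N = Phi r + Phi n.
  by rewrite /Phi (cD_per a1 a2) (SU_per a1 a2) (SD_per a1 a2); ring.
have Hcl := orig_compat a1 a2 S1 S2 r Hc Hn.
have Hblk : forall i t, (r <= i)%N -> (i < t)%N -> (t <= r + n)%N -> ~~ w i ->
     (forall q, (i < q < t)%N -> P q < P i) -> P t = P i ->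
     Phi i + (nat_of_bool true)%:Z <= Phi t.
  move=> i t Hi Hit Ht Hd Hin Heq.
  have HQ := block_Q _ _ _ _ _ _ Hcl Hi Hit Ht Hd Hin Heq.
  have HW := W1 a1 a2 i t Hn Hd (ltnW Hit).
  move: HW HQ Heq; rewrite /X /Y /Phi !PE !QE => HW HQ Heq.
  have H3 : a1%:Z * (SD t - SD i) <= a1%:Z * (cU t - cU i - 1) by apply: ler_wpM2l; lia.
  rewrite PoszM /=; nia.
have [_ H2] := @decomp w wt Phi true r (r + n)%N ltac:(lia) Hmax
  ltac:(move=> j Hj Hd; rewrite /Phi cDS SUS SDS (negbTE Hd) /=;
        have HH := leq_mul (leqnn a1) (bnd_down a1 a2 d1 S1 S2 Hb1 Hn j Hd); clear -HH; lia)
  ltac:(move=> j Hj Hu Hw; rewrite /Phi cDS SUS SDS Hu Hw /=; lia)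
  Hblk.
have := H2 erefl (up_in_window a1 a2 S1 S2 r Hr Hn Hy0); rewrite Hper /Phi /=; lia.
Qed.

End Main2.

Section Main3.
Variables (a1 a2 d1 d2 : nat) (S1 S2 : nat -> nat).
Local Notation n := (nn a1 a2).
Local Notation w := (wd a1 a2).
Local Notation wt := (wt a1 a2 S1 S2).
Local Notation P := (P w wt).
Local Notation Q := (Q w wt).
Local Notation cU := (cU w).
Local Notation cD := (cD w).
Local Notation SU := (SU w wt).
Local Notation SD := (SD w wt).

Lemma SU_bound : (forall v, is_vert a1 a2 v -> (S2 v <= d2)%N) -> (0 < n)%N ->
  SU n <= d2%:Z * cU n.
Proof.
move=> Hb Hn; have := @SU_win w wt d2 0 n (leq0n n) (fun j _ Hj => bnd_up a1 a2 d2 S1 S2 Hb Hn j Hj).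
by rewrite /SU /cU !pre0 !subr0.
Qed.
Lemma SD_bound : (forall h, is_horiz a1 a2 h -> (S1 h <= d1)%N) -> (0 < n)%N ->
  SD n <= d1%:Z * cD n.
Proof.
move=> Hb Hn; have := @SD_win w wt d1 0 n (leq0n n) (fun j _ Hj => bnd_down a1 a2 d1 S1 S2 Hb Hn j Hj).
by rewrite /SD /cD !pre0 !subr0.
Qed.

Lemma La : compatible a1 a2 S1 S2 -> (0 < n)%N ->
  (forall h, is_horiz a1 a2 h -> (S1 h <= d1)%N) ->
  (forall v, is_vert a1 a2 v -> (S2 v <= d2)%N) ->
  (d2 * a2 <= a1)%N ->
  0 <= d1%:Z * cD n - d1%:Z * SU n - SD n.
Proof.
move=> Hc Hn Hb1 Hb2 Hda.
have [Xn Yn] := XYn a1 a2 Hn; rewrite /X /Y in Xn Yn.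
have HPn : P n <= 0.
  rewrite PE; have := SU_bound Hb2 Hn; rewrite Xn Yn; lia.
have [r [Hr Hmax]] := orig_rot a1 a2 S1 S2 Hn HPn.
set Phi := fun q => d1%:Z * cD q - d1%:Z * SU q - SD q.
have Hper : Phi (r + n)%N = Phi r + Phi n.
  by rewrite /Phi (cD_per a1 a2) (SU_per a1 a2) (SD_per a1 a2); ring.
have Hcl := orig_compat a1 a2 S1 S2 r Hc Hn.
have Hblk : forall i t, (r <= i)%N -> (i < t)%N -> (t <= r + n)%N -> ~~ w i ->
     (forall q, (i < q < t)%N -> P q < P i) -> P t = P i ->
     Phi i + (nat_of_bool false)%:Z <= Phi t.
  move=> i t Hi Hit Ht Hd Hin Heq.
  have HQ := block_Q _ _ _ _ _ _ Hcl Hi Hit Ht Hd Hin Heq.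
  have H1 := @block_one_up w wt a1%:Z a2%:Z d2 i t Hit ltac:(lia) ltac:(rewrite -PoszM mulnC; lia)
    ltac:(move=> j _ Hj; exact: bnd_up a1 a2 d2 S1 S2 Hb2 Hn j Hj)
    ltac:(move=> p Hp Hpt Hup; have := W3 a1 a2 p t Hn Hup ltac:(lia); rewrite /X /Y; lia)
    Hin Heq.
  move: HQ Heq H1; rewrite /Phi !PE !QE => HQ Heq H1.
  have := SD_mono w wt i t (ltnW Hit); lia.
have [H1 _] := @decomp w wt Phi false r (r + n)%N ltac:(lia) Hmax
  ltac:(move=> j Hj Hd; rewrite /Phi cDS SUS SDS (negbTE Hd) /=;
        have HH := bnd_down a1 a2 d1 S1 S2 Hb1 Hn j Hd; lia)
  ltac:(move=> j Hj Hu Hw; rewrite /Phi cDS SUS SDS Hu Hw /=; lia)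
  Hblk.
move: H1; rewrite Hper /Phi /=; lia.
Qed.

Lemma L3 : compatible a1 a2 S1 S2 -> (0 < n)%N -> ~ (cD n < SU n /\ cU n < SD n).
Proof.
move=> Hc Hn [Hy Hx].
have HPn : 0 < P n by rewrite PE; lia.
have HQn : 0 < Q n by rewrite QE; lia.
have [p [Hp H1 H2]] := @ex_argmax_first P n.+1 (n + n)%N ltac:(lia).
have Hlt : forall q, (p - n <= q < p)%N -> P q < P p.
  move=> q Hq; case: (leqP q n) => Hqn.
  - have := H1 (q + n)%N ltac:(lia); rewrite P_per; lia.
  - apply: H2; lia.
have [v Ev] : exists v, p = v.+1 by exists p.-1; lia.
subst p.
have Hwv : w v.
  have := Hlt v ltac:(lia); rewrite PS /pstep; case: (w v) => //; lia.
have [h [Hh G1 G2]] := @ex_argmin_last Q (v - n).+1 v ltac:(lia).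
have Hgt : forall q, (h < q <= h + n)%N -> Q h < Q q.
  move=> q Hq; case: (leqP q v) => Hqv.
  - apply: G2; lia.
  - have E : q = ((q - n) + n)%N by lia.
    rewrite E Q_per; have := G1 (q - n)%N ltac:(lia); lia.
have Hwh : ~~ w h.
  have := Hgt h.+1 ltac:(lia); rewrite QS /qstep; case: (w h) => //; lia.
have Hhv : (h < v)%N.
  rewrite ltn_neqAle; move: Hh => /andP [_ ->]; rewrite andbT.
  by apply/eqP => E; subst h; rewrite Hwv in Hwh.
have [k [Hk [E|E]]] := @compat_all a1 a2 S1 S2 Hc Hn h v Hhv ltac:(lia) Hwh Hwv.
- have := Hgt (h + k.+1)%N ltac:(lia); rewrite E; lia.
- have := Hlt (v - k)%N ltac:(lia); rewrite E; lia.
Qed.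

End Main3.

Notation Pg := P (only parsing).
Notation Qg := Q (only parsing).
Notation cUg := cU (only parsing).
Notation cDg := cD (only parsing).
Notation SUg := SU (only parsing).
Notation SDg := SD (only parsing).

Lemma pre_rev_eq (f g : nat -> int) N q : (forall j, g j = f (N - j)%N) -> (q <= N.+1)%N ->
  pre g q = pre f N.+1 - pre f (N.+1 - q)%N.
Proof.
move=> Hg Hq.
have E : pre g q = pre (fun j => f (N - j)%N) q by apply: pre_ext => j _; rewrite Hg.
by rewrite E -(@pre_rev f N q Hq) addrK.
Qed.

Section Mirror.
Variables (a1 a2 d1 d2 : nat) (S1 S2 : nat -> nat).
Local Notation n := (nn a1 a2).
Local Notation w := (wd a1 a2).
Local Notation wt := (wt a1 a2 S1 S2).
Local Notation P := (P w wt).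
Local Notation Q := (Q w wt).
Local Notation cU := (cU w).
Local Notation cD := (cD w).
Local Notation SU := (SU w wt).
Local Notation SD := (SD w wt).
Local Notation N := (n + n)%N.
Definition upm j := ~~ w (N - j)%N.
Definition wtm j := wt (N - j)%N.
Lemma upmE j : upm j = ~~ w (N - j)%N. Proof. by []. Qed.
Lemma wtmE j : wtm j = wt (N - j)%N. Proof. by []. Qed.
Local Notation Pm := (Pg upm wtm).
Local Notation Qm := (Qg upm wtm).
Local Notation cUm := (cUg upm).
Local Notation cDm := (cDg upm).
Local Notation SUm := (SUg upm wtm).
Local Notation SDm := (SDg upm wtm).

Lemma Pm_rev q : (q <= N.+1)%N -> Pm q = Q N.+1 - Q (N.+1 - q)%N.
Proof. by apply: pre_rev_eq => j; rewrite /pstep /qstep /upm /wtm; case: (w _). Qed.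
Lemma Qm_rev q : (q <= N.+1)%N -> Qm q = P N.+1 - P (N.+1 - q)%N.
Proof. by apply: pre_rev_eq => j; rewrite /pstep /qstep /upm /wtm; case: (w _). Qed.
Lemma cUm_rev q : (q <= N.+1)%N -> cUm q = cD N.+1 - cD (N.+1 - q)%N.
Proof. by apply: pre_rev_eq => j; rewrite /upm. Qed.
Lemma cDm_rev q : (q <= N.+1)%N -> cDm q = cU N.+1 - cU (N.+1 - q)%N.
Proof. by apply: pre_rev_eq => j; rewrite /upm negbK. Qed.
Lemma SUm_rev q : (q <= N.+1)%N -> SUm q = SD N.+1 - SD (N.+1 - q)%N.
Proof. by apply: pre_rev_eq => j; rewrite /upm /wtm; case: (w _). Qed.
Lemma SDm_rev q : (q <= N.+1)%N -> SDm q = SU N.+1 - SU (N.+1 - q)%N.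
Proof. by apply: pre_rev_eq => j; rewrite /upm /wtm; case: (w _). Qed.

Lemma mirror_compat lo : compatible a1 a2 S1 S2 -> (0 < n)%N -> (lo + n <= N.+1)%N ->
  compat_lin upm wtm lo (lo + n).
Proof.
move=> Hc Hn Hlo h v Hlh Hhv Hvl Hh Hv.
have Hh' : w (N - h)%N by move: Hh; rewrite /upm negbK.
have Hv' : ~~ w (N - v)%N by exact: Hv.
have [k [Hk [E|E]]] := @compat_all a1 a2 S1 S2 Hc Hn (N - v)%N (N - h)%N ltac:(lia) ltac:(lia) Hv' Hh'.
- exists k; split; first lia. right.
  rewrite !Pm_rev; try lia.
  have -> : (N.+1 - v.+1 = N - v)%N by lia.
  have -> : (N.+1 - (v - k) = N - v + k.+1)%N by lia.
  by rewrite E.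
- exists k; split; first lia. left.
  rewrite !Qm_rev; try lia.
  have -> : (N.+1 - h = (N - h).+1)%N by lia.
  have -> : (N.+1 - (h + k.+1) = N - h - k)%N by lia.
  by rewrite E.
Qed.

Lemma mirror_rot : (0 < n)%N -> Q n <= 0 ->
  exists r, (r + n <= N.+1)%N /\ (0 < r)%N /\ (n <= N.+1 - r)%N /\
    forall q, (r <= q <= r + n)%N -> Pm q <= Pm r.
Proof.
move=> Hn HQn.
have [m [Hm H1 _]] := @ex_argmin_last Q n N (leq_addr n n).
have Hge : forall p, (m - n <= p <= m)%N -> Q m <= Q p.
  move=> p Hp; case: (leqP n p) => Hpn; first by apply: H1; lia.
  have := H1 (p + n)%N ltac:(lia); rewrite Q_per; lia.
exists (N.+1 - m)%N; split; first lia. split; first lia. split; first lia.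
move=> q Hq; rewrite !Pm_rev; try lia.
have := Hge (N.+1 - q)%N ltac:(lia).
have -> : (N.+1 - (N.+1 - m) = m)%N by lia.
lia.
Qed.

Lemma mirror_window (F : (nat -> bool) -> (nat -> nat) -> nat -> int) G r :
  (0 < r)%N -> (n <= N.+1 - r)%N -> (r + n <= N.+1)%N ->
  (forall q, (q <= N.+1)%N -> F upm wtm q = G N.+1 - G (N.+1 - q)%N) ->
  (forall q, G (q + n)%N = G q + G n) ->
  F upm wtm (r + n)%N - F upm wtm r = G n.
Proof.
move=> Hr Hr2 Hrn HF HG; rewrite !HF; try lia.
have E : (N.+1 - r = (N.+1 - (r + n)) + n)%N by lia.
rewrite E HG; ring.
Qed.

Lemma down_in_window r : (0 < r)%N -> (n <= N.+1 - r)%N -> (r + n <= N.+1)%N ->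
  (0 < n)%N -> 0 < SD n ->
  exists j, [/\ (r <= j < r + n)%N, upm j & (0 < wtm j)%N].
Proof.
move=> Hr Hr2 Hrn Hn Hx; have [h [Hh Hf]] := @pre_pos_ex _ n Hx.
move: Hf; case E: (w h) => //= Hf.
have Hf' : (0 < wt h)%N by lia.
set m := (N.+1 - r)%N.
have [h' [Hh'1 Hh'2 Ew Et]] : exists h', [/\ (m - n <= h')%N, (h' < m)%N, w h' = w h & wt h' = wt h].
  case: (leqP (m - n) h) => Hmh.
    exists h; split => //; lia.
  exists (h + n)%N; split; [lia | lia | by rewrite wd_per | by rewrite wt_per].
exists (N - h')%N; split.
- lia.
- by rewrite /upm (_ : (N - (N - h') = h')%N) ?Ew ?E //; lia.
- by rewrite /wtm (_ : (N - (N - h') = h')%N) ?Et //; lia.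
Qed.

Lemma W1m i t : (0 < n)%N -> ~~ upm i -> (i < t)%N -> (t <= N.+1)%N ->
  a2%:Z * (cUm t - cUm i) < a1%:Z * (cDm t - cDm i) + a2%:Z.
Proof.
move=> Hn Hi Hit Ht.
have Hw : w (N - i)%N by move: Hi; rewrite /upm negbK.
have := W2 a1 a2 (N.+1 - t) (N - i) Hn Hw ltac:(lia).
rewrite !cUm_rev ?cDm_rev; try lia.
have -> : ((N - i).+1 = N.+1 - i)%N by lia.
rewrite /X /Y; lia.
Qed.

Lemma W3m p t : (0 < n)%N -> upm p -> (p < t)%N -> (t <= N.+1)%N ->
  a2%:Z * (cUm t - cUm p.+1) < a1%:Z * (cDm t - cDm p.+1 + 1).
Proof.
move=> Hn Hp Hpt Ht.
have := W4 a1 a2 (N.+1 - t) (N - p) Hn Hp ltac:(lia).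
rewrite !cUm_rev ?cDm_rev; try lia.
have -> : (N.+1 - p.+1 = N - p)%N by lia.
rewrite /X /Y; lia.
Qed.

End Mirror.

Section Mirror2.
Variables (a1 a2 d1 d2 : nat) (S1 S2 : nat -> nat).
Local Notation n := (nn a1 a2).
Local Notation w := (wd a1 a2).
Local Notation wt := (wt a1 a2 S1 S2).
Local Notation cU := (cU w).
Local Notation cD := (cD w).
Local Notation SU := (SU w wt).
Local Notation SD := (SD w wt).
Local Notation N := (n + n)%N.
Local Notation upm := (upm a1 a2).
Local Notation wtm := (wtm a1 a2 S1 S2).
Local Notation Pm := (Pg upm wtm).
Local Notation Qm := (Qg upm wtm).
Local Notation cUm := (cUg upm).
Local Notation cDm := (cDg upm).
Local Notation SUm := (SUg upm wtm).
Local Notation SDm := (SDg upm wtm).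

Lemma bnd_upm : (forall v, is_vert a1 a2 v -> (S2 v <= d2)%N) -> (0 < n)%N ->
  forall j, ~~ upm j -> (wtm j <= d2)%N.
Proof.
move=> Hb Hn j Hj; rewrite wtmE; apply: (bnd_up a1 a2 d2 S1 S2 Hb Hn); by move: Hj; rewrite upmE negbK.
Qed.
Lemma bnd_downm : (forall h, is_horiz a1 a2 h -> (S1 h <= d1)%N) -> (0 < n)%N ->
  forall j, upm j -> (wtm j <= d1)%N.
Proof.
move=> Hb Hn j Hj; rewrite wtmE; apply: (bnd_down a1 a2 d1 S1 S2 Hb Hn); by rewrite -upmE.
Qed.

Lemma mwin_all r : (0 < r)%N -> (n <= N.+1 - r)%N -> (r + n <= N.+1)%N ->
  [/\ cDm (r + n)%N - cDm r = cU n, SUm (r + n)%N - SUm r = SD n & SDm (r + n)%N - SDm r = SU n].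
Proof.
move=> H1 H2 H3; split.
- apply: (@mirror_window a1 a2 S1 S2 (fun u _ => cDg u) (cUg w)) => //;
    [move=> q Hq; exact: cDm_rev | move=> q; exact: (cU_per a1 a2)].
- apply: (@mirror_window a1 a2 S1 S2 (fun u v => SUg u v) (SDg w wt)) => //;
    [move=> q Hq; exact: SUm_rev | move=> q; exact: (SD_per a1 a2)].
- apply: (@mirror_window a1 a2 S1 S2 (fun u v => SDg u v) (SUg w wt)) => //;
    [move=> q Hq; exact: SDm_rev | move=> q; exact: (SU_per a1 a2)].
Qed.

Lemma L2 : compatible a1 a2 S1 S2 -> (0 < n)%N ->
  (forall v, is_vert a1 a2 v -> (S2 v <= d2)%N) ->
  SD n <= cU n -> 0 < SD n ->
  0 < (a2 * d2)%:Z * cU n - (a2%:Z * d2%:Z - a1%:Z) * SD n - a2%:Z * SU n.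
Proof.
move=> Hc Hn Hb2 Hx Hx0.
have HQn : Qg w wt n <= 0 by rewrite QE; lia.
have [r [Hrn [Hr0 [Hr2 Hmax]]]] := @mirror_rot a1 a2 S1 S2 Hn HQn.
set Phi := fun q => (a2 * d2)%:Z * cDm q - (a2%:Z * d2%:Z - a1%:Z) * SUm q - a2%:Z * SDm q.
have [E1 E2 E3] := mwin_all r Hr0 Hr2 Hrn.
have Hper : Phi (r + n)%N - Phi r = (a2 * d2)%:Z * cU n - (a2%:Z * d2%:Z - a1%:Z) * SD n - a2%:Z * SU n.
  by rewrite /Phi -E1 -E2 -E3; ring.
have Hcl := @mirror_compat a1 a2 S1 S2 r Hc Hn Hrn.
have Hblk : forall i t, (r <= i)%N -> (i < t)%N -> (t <= r + n)%N -> ~~ upm i ->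
     (forall q, (i < q < t)%N -> Pm q < Pm i) -> Pm t = Pm i ->
     Phi i + (nat_of_bool true)%:Z <= Phi t.
  move=> i t Hi Hit Ht Hd Hin Heq.
  have HQ := block_Q _ _ _ _ _ _ Hcl Hi Hit Ht Hd Hin Heq.
  have HW := @W1m a1 a2 i t Hn Hd Hit ltac:(lia).
  move: HW HQ Heq; rewrite /Phi !PE !QE => HW HQ Heq.
  have H3 : a2%:Z * (SDm t - SDm i) <= a2%:Z * (cUm t - cUm i - 1) by apply: ler_wpM2l; lia.
  rewrite PoszM /=; nia.
have [_ H2] := @decomp upm wtm Phi true r (r + n)%N ltac:(lia) Hmax
  ltac:(move=> j Hj Hd; rewrite /Phi cDS SUS SDS (negbTE Hd) /=;
        have HH := leq_mul (leqnn a2) (bnd_upm Hb2 Hn j Hd); clear -HH; lia)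
  ltac:(move=> j Hj Hu Hw; rewrite /Phi cDS SUS SDS Hu Hw /=; lia)
  Hblk.
have := H2 erefl (@down_in_window a1 a2 S1 S2 r Hr0 Hr2 Hrn Hn Hx0).
move: Hper; rewrite /Phi /= => Hper; lia.
Qed.

Lemma Lb : compatible a1 a2 S1 S2 -> (0 < n)%N ->
  (forall h, is_horiz a1 a2 h -> (S1 h <= d1)%N) ->
  (forall v, is_vert a1 a2 v -> (S2 v <= d2)%N) ->
  (d1 * a1 <= a2)%N ->
  0 <= d2%:Z * cU n - d2%:Z * SD n - SU n.
Proof.
move=> Hc Hn Hb1 Hb2 Hda.
have [Xn Yn] := XYn a1 a2 Hn; rewrite /X /Y in Xn Yn.
have HQn : Qg w wt n <= 0.
  rewrite QE; have := @SD_bound a1 a2 d1 S1 S2 Hb1 Hn; rewrite Xn Yn; lia.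
have [r [Hrn [Hr0 [Hr2 Hmax]]]] := @mirror_rot a1 a2 S1 S2 Hn HQn.
set Phi := fun q => d2%:Z * cDm q - d2%:Z * SUm q - SDm q.
have [E1 E2 E3] := mwin_all r Hr0 Hr2 Hrn.
have Hper : Phi (r + n)%N - Phi r = d2%:Z * cU n - d2%:Z * SD n - SU n.
  by rewrite /Phi -E1 -E2 -E3; ring.
have Hcl := @mirror_compat a1 a2 S1 S2 r Hc Hn Hrn.
have Hblk : forall i t, (r <= i)%N -> (i < t)%N -> (t <= r + n)%N -> ~~ upm i ->
     (forall q, (i < q < t)%N -> Pm q < Pm i) -> Pm t = Pm i ->
     Phi i + (nat_of_bool false)%:Z <= Phi t.
  move=> i t Hi Hit Ht Hd Hin Heq.
  have HQ := block_Q _ _ _ _ _ _ Hcl Hi Hit Ht Hd Hin Heq.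
  have H1 := @block_one_up upm wtm a2%:Z a1%:Z d1 i t Hit ltac:(lia) ltac:(rewrite -PoszM mulnC; lia)
    ltac:(move=> j _ Hj; exact: bnd_downm Hb1 Hn j Hj)
    ltac:(move=> p Hp Hpt Hup; have := @W3m a1 a2 p t Hn Hup ltac:(lia) ltac:(lia); lia)
    Hin Heq.
  move: HQ Heq H1; rewrite /Phi !PE !QE => HQ Heq H1.
  have := SD_mono upm wtm i t (ltnW Hit); lia.
have [H1 _] := @decomp upm wtm Phi false r (r + n)%N ltac:(lia) Hmax
  ltac:(move=> j Hj Hd; rewrite /Phi cDS SUS SDS (negbTE Hd) /=;
        have HH := bnd_upm Hb2 Hn j Hd; lia)
  ltac:(move=> j Hj Hu Hw; rewrite /Phi cDS SUS SDS Hu Hw /=; lia)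
  Hblk.
move: Hper H1; rewrite /Phi /=; lia.
Qed.
End Mirror2.

Lemma summary d1 d2 a1 a2 S1 S2 :
  compatible a1 a2 S1 S2 ->
  (forall h, is_horiz a1 a2 h -> (S1 h <= d1)%N) ->
  (forall v, is_vert a1 a2 v -> (S2 v <= d2)%N) ->
  let x := norm1 a1 a2 S1 in let y := norm2 a1 a2 S2 in
  [/\ (x <= d1 * a1)%N, (y <= d2 * a2)%N,
      ((d2 * a2 <= a1)%N -> (x + d1 * y <= d1 * a1)%N) &
      ((d1 * a1 <= a2)%N -> (d2 * x + y <= d2 * a2)%N)] /\
  [/\ ((0 < y <= a1)%N -> (a1 * x + a1 * d1 * y < d1 * a1 * a1 + a2 * y)%N),
      ((0 < x <= a2)%N -> (a2 * y + a2 * d2 * x < d2 * a2 * a2 + a1 * x)%N)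
    & ~ ((a1 < y)%N /\ (a2 < x)%N)].
Proof.
move=> Hc Hb1 Hb2 x y.
case: (posnP (nn a1 a2)) => Hn.
  have Ha1 : a1 = 0%N by move: Hn; rewrite /nn; lia.
  have Ha2 : a2 = 0%N by move: Hn; rewrite /nn; lia.
  have Hx : x = 0%N by rewrite /x /norm1 nedgesE Hn big_ord0.
  have Hy : y = 0%N by rewrite /y /norm2 nedgesE Hn big_ord0.
  rewrite Hx Hy Ha1 Ha2; split; split => //; lia.
have [Xn Yn] := XYn a1 a2 Hn; rewrite /X /Y in Xn Yn.
have Ex := SD_norm1 a1 a2 S1 S2 Hn; have Ey := SU_norm2 a1 a2 S1 S2 Hn.
rewrite -/x in Ex; rewrite -/y in Ey.
have Bx := @SD_bound a1 a2 d1 S1 S2 Hb1 Hn.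
have By := @SU_bound a1 a2 d2 S1 S2 Hb2 Hn.
rewrite Ex Xn in Bx; rewrite Ey Yn in By.
split; split.
- lia.
- lia.
- move=> H; have := @La a1 a2 d1 d2 S1 S2 Hc Hn Hb1 Hb2 H; rewrite Xn Ey Ex; nia.
- move=> H; have := @Lb a1 a2 d1 d2 S1 S2 Hc Hn Hb1 Hb2 H; rewrite Yn Ey Ex; nia.
- move=> H; have := @L1 a1 a2 d1 S1 S2 Hc Hn Hb1 ltac:(rewrite Ey Xn; lia) ltac:(rewrite Ey; lia).
  rewrite Xn Ey Ex; nia.
- move=> H; have := @L2 a1 a2 d2 S1 S2 Hc Hn Hb2 ltac:(rewrite Ex Yn; lia) ltac:(rewrite Ex; lia).
  rewrite Yn Ey Ex; nia.
- move=> [H1 H2]; apply: (@L3 a1 a2 S1 S2 Hc Hn); rewrite Xn Yn Ex Ey; split; lia.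
Qed.

Lemma sum4 (F : nat -> rat) : \sum_(i < 4) F i = F 0%N + F 1%N + F 2%N + F 3%N.
Proof. by rewrite !big_ord_recr big_ord0 /= add0r. Qed.
Lemma sum3 (F : nat -> rat) : \sum_(i < 3) F i = F 0%N + F 1%N + F 2%N.
Proof. by rewrite !big_ord_recr big_ord0 /= add0r. Qed.

Lemma hull4 (p0 p1 p2 p3 : pt) (c0 c1 c2 c3 : rat) (p : pt) :
  0 <= c0 -> 0 <= c1 -> 0 <= c2 -> 0 <= c3 -> c0 + c1 + c2 + c3 = 1 ->
  p.1 = c0 * p0.1 + c1 * p1.1 + c2 * p2.1 + c3 * p3.1 ->
  p.2 = c0 * p0.2 + c1 * p1.2 + c2 * p2.2 + c3 * p3.2 ->
  in_conv_hull [:: p0; p1; p2; p3] p.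
Proof.
move=> H0 H1 H2 H3 Hs E1 E2.
exists (fun i => nth 0 [:: c0; c1; c2; c3] i); split; last split; last split.
- by move=> [|[|[|[|i]]]] //=; rewrite nth_nil.
- by rewrite /= !big_ord_recr big_ord0 /= add0r.
- by rewrite /= !big_ord_recr big_ord0 /= add0r E1.
- by rewrite /= !big_ord_recr big_ord0 /= add0r E2.
Qed.

Lemma hull3 (p0 p1 p2 : pt) (c0 c1 c2 : rat) (p : pt) :
  0 <= c0 -> 0 <= c1 -> 0 <= c2 -> c0 + c1 + c2 = 1 ->
  p.1 = c0 * p0.1 + c1 * p1.1 + c2 * p2.1 ->
  p.2 = c0 * p0.2 + c1 * p1.2 + c2 * p2.2 ->
  in_conv_hull [:: p0; p1; p2] p.
Proof.
move=> H0 H1 H2 Hs E1 E2.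
exists (fun i => nth 0 [:: c0; c1; c2] i); split; last split; last split.
- by move=> [|[|[|i]]] //=; rewrite nth_nil.
- by rewrite /= !big_ord_recr big_ord0 /= add0r.
- by rewrite /= !big_ord_recr big_ord0 /= add0r E1.
- by rewrite /= !big_ord_recr big_ord0 /= add0r E2.
Qed.

Lemma div_mul_id (a b : rat) : 0 <= a -> a <= b -> a / b * b = a.
Proof.
move=> Ha Hab; case: (eqVneq b 0) => Hb.
  by rewrite Hb mulr0; lra.
by rewrite divfK.
Qed.

Lemma div_unit (a b : rat) : 0 <= a -> a <= b -> 0 <= a / b <= 1.
Proof.
move=> Ha Hab; case: (eqVneq b 0) => Hb.
  by rewrite Hb invr0 mulr0 lexx ler01.
have Hb' : 0 < b by lra.
rewrite divr_ge0 //=; [| lra]; rewrite ler_pdivrMr //; lra.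
Qed.

Lemma hull_trap_a_aux (B D c x y s t : rat) : 0 <= s <= 1 -> 0 <= t <= 1 ->
  s * (B - c * y) = x -> t * D = y ->
  in_conv_hull [:: (0, 0); (B, 0); (0, D); (B - c * D, D)] (x, y).
Proof.
move=> /andP [Hs0 Hs1] /andP [Ht0 Ht1] Es Et.
have H1 : 0 <= 1 - s by rewrite subr_ge0.
have H2 : 0 <= 1 - t by rewrite subr_ge0.
apply: (@hull4 _ _ _ _ ((1 - s) * (1 - t)) (s * (1 - t)) ((1 - s) * t) (s * t)) => /=.
- exact: mulr_ge0. - exact: mulr_ge0. - exact: mulr_ge0. - exact: mulr_ge0. - ring.
- rewrite -Es -Et; ring.
- rewrite -Et; ring.
Qed.

Lemma hull_trap_a (B D c x y : rat) : 0 <= c -> 0 <= x -> 0 <= y -> y <= D -> x + c * y <= B ->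
  in_conv_hull [:: (0, 0); (B, 0); (0, D); (B - c * D, D)] (x, y).
Proof.
move=> Hc Hx Hy HyD Hxy.
have Hx2 : x <= B - c * y by rewrite lerBrDr.
apply: (@hull_trap_a_aux B D c x y (x / (B - c * y)) (y / D)).
- exact: div_unit.
- exact: div_unit.
- by rewrite div_mul_id.
- by rewrite div_mul_id.
Qed.

Lemma hull_trap_b_aux (B D c x y s t : rat) : 0 <= s <= 1 -> 0 <= t <= 1 ->
  s * (D - c * x) = y -> t * B = x ->
  in_conv_hull [:: (0, 0); (B, 0); (0, D); (B, D - c * B)] (x, y).
Proof.
move=> /andP [Hs0 Hs1] /andP [Ht0 Ht1] Es Et.
have H1 : 0 <= 1 - s by rewrite subr_ge0.
have H2 : 0 <= 1 - t by rewrite subr_ge0.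
apply: (@hull4 _ _ _ _ ((1 - s) * (1 - t)) ((1 - s) * t) (s * (1 - t)) (s * t)) => /=.
- exact: mulr_ge0. - exact: mulr_ge0. - exact: mulr_ge0. - exact: mulr_ge0. - ring.
- rewrite -Et; ring.
- rewrite -Es -Et; ring.
Qed.

Lemma hull_trap_b (B D c x y : rat) : 0 <= c -> 0 <= x -> 0 <= y -> x <= B -> c * x + y <= D ->
  in_conv_hull [:: (0, 0); (B, 0); (0, D); (B, D - c * B)] (x, y).
Proof.
move=> Hc Hx Hy HxB Hxy.
have Hy2 : y <= D - c * x by rewrite lerBrDl.
apply: (@hull_trap_b_aux B D c x y (y / (D - c * x)) (x / B)).
- exact: div_unit.
- exact: div_unit.
- by rewrite div_mul_id.
- by rewrite div_mul_id.
Qed.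

Lemma hull_tri_aux (p1 p2 : pt) (x y c1 c2 : rat) : 0 <= c1 -> 0 <= c2 -> c1 + c2 <= 1 ->
  x = c1 * p1.1 + c2 * p2.1 -> y = c1 * p1.2 + c2 * p2.2 ->
  in_conv_hull [:: (0, 0); p1; p2] (x, y).
Proof.
move=> H1 H2 H3 E1 E2.
apply: (@hull3 _ _ _ (1 - c1 - c2) c1 c2) => /=.
- lra.
- by []. - by []. - ring.
- by rewrite E1; ring.
- by rewrite E2; ring.
Qed.

Lemma hull_tri_ABC (a1 a2 b x y : rat) : 0 < a1 -> 0 < b -> 0 <= y -> a2 * y <= a1 * x ->
  a1 * x - a2 * y + b * y <= b * a1 ->
  in_conv_hull [:: (0, 0); (b, 0); (a2, a1)] (x, y).
Proof.
move=> Ha1 Hb Hy H1 H2.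
have Ha1' : a1 != 0 by rewrite gt_eqF.
have Hb' : b != 0 by rewrite gt_eqF.
have Hba : 0 < b * a1 by apply: mulr_gt0.
apply: (@hull_tri_aux _ _ x y ((a1 * x - a2 * y) / (b * a1)) (y / a1)).
- by apply: divr_ge0; [rewrite subr_ge0 | exact: ltW].
- by apply: divr_ge0; [ | exact: ltW].
- have -> : (a1 * x - a2 * y) / (b * a1) + y / a1 = (a1 * x - a2 * y + b * y) / (b * a1).
    by field; apply/andP.
  by rewrite ler_pdivrMr // mul1r.
- by rewrite /=; field; rewrite Ha1' Hb'.
- by rewrite /= mulr0 add0r divfK.
Qed.

Lemma hull_tri_ACD (a1 a2 c x y : rat) : 0 < a2 -> 0 < c -> 0 <= x -> a1 * x <= a2 * y ->
  a2 * y - a1 * x + c * x <= c * a2 ->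
  in_conv_hull [:: (0, 0); (a2, a1); (0, c)] (x, y).
Proof.
move=> Ha2 Hc Hx H1 H2.
have Ha2' : a2 != 0 by rewrite gt_eqF.
have Hc' : c != 0 by rewrite gt_eqF.
have Hca : 0 < c * a2 by apply: mulr_gt0.
apply: (@hull_tri_aux _ _ x y (x / a2) ((a2 * y - a1 * x) / (c * a2))).
- by apply: divr_ge0; [ | exact: ltW].
- by apply: divr_ge0; [rewrite subr_ge0 | exact: ltW].
- have -> : x / a2 + (a2 * y - a1 * x) / (c * a2) = (a2 * y - a1 * x + c * x) / (c * a2).
    by field; apply/andP.
  by rewrite ler_pdivrMr // mul1r.
- by rewrite /= mulr0 addr0 divfK.
- by rewrite /=; field; rewrite Ha2' Hc'.
Qed.


Lemma natR_le (m k : nat) : (m <= k)%N -> (m%:R : rat) <= k%:R.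
Proof. by rewrite ler_nat. Qed.
Lemma natR_lt (m k : nat) : (m < k)%N -> (m%:R : rat) < k%:R.
Proof. by rewrite ltr_nat. Qed.

Theorem proposition4p22 (d1 d2 a1 a2 : nat) (S1 S2 : nat -> nat) :
  compatible a1 a2 S1 S2 ->
  (forall h, is_horiz a1 a2 h -> (S1 h <= d1)%N) ->
  (forall v, is_vert a1 a2 v -> (S2 v <= d2)%N) ->
  [/\ ((d2 * a2 <= a1)%N ->
        in_conv_hull
          [:: (0, 0); ((d1 * a1)%:R, 0); (0, (d2 * a2)%:R);
              ((d1 * a1)%:R - (d1 * d2 * a2)%:R, (d2 * a2)%:R)]
          ((norm1 a1 a2 S1)%:R, (norm2 a1 a2 S2)%:R)),
      ((d1 * a1 <= a2)%N ->
        in_conv_hull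
          [:: (0, 0); ((d1 * a1)%:R, 0); (0, (d2 * a2)%:R);
              ((d1 * a1)%:R, (d2 * a2)%:R - (d1 * d2 * a1)%:R)]
          ((norm1 a1 a2 S1)%:R, (norm2 a1 a2 S2)%:R))
    & ((0 < a1 < d2 * a2)%N -> (0 < a2 < d1 * a1)%N ->
        region_c d1 d2 a1 a2 ((norm1 a1 a2 S1)%:R, (norm2 a1 a2 S2)%:R))].
Proof.
move=> Hc Hb1 Hb2.
move: (summary d1 d2 a1 a2 S1 S2 Hc Hb1 Hb2) => /=.
set x := norm1 a1 a2 S1; set y := norm2 a1 a2 S2.
move=> [[Bx By Ha Hb] [H1 H2 H3]].
split.
- move=> Hda.
  have -> : ((d1 * d2 * a2)%:R : rat) = d1%:R * (d2 * a2)%:R by rewrite -natrM mulnA.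
  apply: hull_trap_a => //.
  + exact: natR_le.
  + have := @natR_le _ _ (Ha Hda); rewrite natrD !natrM => H; rewrite ?natrM; exact: H.
- move=> Hda.
  have -> : ((d1 * d2 * a1)%:R : rat) = d2%:R * (d1 * a1)%:R by rewrite -natrM; congr (_%:R); lia.
  apply: hull_trap_b => //.
  + exact: natR_le.
  + have := @natR_le _ _ (Hb Hda); rewrite natrD !natrM => H; rewrite ?natrM; exact: H.
- move=> /andP [Ha10 Ha1d] /andP [Ha20 Ha2d].
  split; last split.
  +
    case: (boolP ((y <= a1)%N && (a2 * y <= a1 * x)%N)) => [/andP [Hy1 Hxy]|Hn1].
    * left; apply: hull_tri_ABC.
      -- by rewrite ltr0n.
      -- rewrite ltr0n; lia.
      -- by [].
      -- by have := @natR_le _ _ Hxy; rewrite !natrM.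
      -- have N1 : (a1 * x + d1 * a1 * y <= d1 * a1 * a1 + a2 * y)%N.
           case: (posnP y) => Hy0.
           ++ rewrite Hy0; nia.
           ++ have := H1 ltac:(lia); lia.
         have := @natR_le _ _ N1; rewrite !natrD !natrM => R; lra.
    * case: (boolP ((x <= a2)%N && (a1 * x <= a2 * y)%N)) => [/andP [Hx1 Hxy]|Hn2].
      -- right; apply: hull_tri_ACD.
         ++ by rewrite ltr0n.
         ++ rewrite ltr0n; lia.
         ++ by [].
         ++ by have := @natR_le _ _ Hxy; rewrite !natrM.
         ++ have N1 : (a2 * y + d2 * a2 * x <= d2 * a2 * a2 + a1 * x)%N.
              case: (posnP x) => Hx0.
              ** rewrite Hx0; nia.
              ** have := H2 ltac:(lia); lia.
            have := @natR_le _ _ N1; rewrite !natrD !natrM => R; lra.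
      -- exfalso; apply: H3.
         move: Hn1 Hn2; rewrite !negb_and -!ltnNge => /orP [Hy|Hy] /orP [Hx|Hx].
         ++ split => //.
         ++ split => //; nia.
         ++ split; nia.
         ++ nia.
  +
    move=> [t [/andP [Ht0 Ht1] [/= Ex Ey]]].
    have Ey' : (y%:R : rat) = t * a1%:R by rewrite Ey; ring.
    have Hy0 : (0 < y)%N.
      rewrite -(ltr0n rat) Ey'; apply: mulr_gt0 => //; by rewrite ltr0n.
    have Hya : (y <= a1)%N.
      rewrite -(ler_nat rat) Ey'.
      have : 0 <= (1 - t) * a1%:R by apply: mulr_ge0; [rewrite subr_ge0 | exact: ler0n].
      lra.
    have := @natR_lt _ _ (H1 ltac:(lia)); rewrite !natrD !natrM => R.
    have E : (a1%:R * x%:R + a1%:R * d1%:R * y%:R : rat) = d1%:R * a1%:R * a1%:R + a2%:R * y%:R.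
      rewrite Ex Ey natrM; ring.
    lra.
  +
    move=> [t [/andP [Ht0 Ht1] [/= Ex Ey]]].
    have Ex' : (x%:R : rat) = t * a2%:R by rewrite Ex; ring.
    have Hx0 : (0 < x)%N.
      rewrite -(ltr0n rat) Ex'; apply: mulr_gt0 => //; by rewrite ltr0n.
    have Hxa : (x <= a2)%N.
      rewrite -(ler_nat rat) Ex'.
      have : 0 <= (1 - t) * a2%:R by apply: mulr_ge0; [rewrite subr_ge0 | exact: ler0n].
      lra.
    have := @natR_lt _ _ (H2 ltac:(lia)); rewrite !natrD !natrM => R.
    have E : (a2%:R * y%:R + a2%:R * d2%:R * x%:R : rat) = d2%:R * a2%:R * a2%:R + a1%:R * x%:R.
      rewrite Ex Ey natrM; ring.
    lra.
Qed.
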